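(* A $po$-$\Gamma$-semigroup $M$ is left regular if and only if for every fuzzy subset $f$ of $M$ we have $f\preceq 1\circ (f\circ f)$.
   Context: Let $M$ and $\Gamma$ be nonempty sets with a map $M\times\Gamma\times M\to M$, $(a,\gamma,b)\mapsto a\gamma b$, satisfying $(a\gamma b)\mu c=a\gamma(b\mu c)$ for all $a,b,c\in M$, $\gamma,\mu\in\Gamma$. A $po$-$\Gamma$-semigroup is such an $M$ with a partial order $\le$ such that $a\le b$ implies $a\gamma c\le b\gamma c$ and $c\gamma a\le c\gamma b$ for all $c\in M$, $\gamma\in\Gamma$. For $H\subseteq M$, $(H]=\{t\in M: t\le h \text{ for some } h\in H\}$; $M\Gamma a\Gamma a=\{x\gamma a\mu a: x\in M,\gamma,\mu\in\Gamma\}$. $M$ is left regular if $a\in(M\Gamma a\Gamma a]$ for every $a\in M$. A fuzzy subset of $M$ is a map $M\to[0,1]$; $1$ is the constant fuzzy subset with value $1$. For $c\in M$ let $A_c=\{(y,z)\in M\times M: c\le y\gamma z \text{ for some }\gamma\in\Gamma\}$. $(f\circ g)(c)=\bigvee_{(y,z)\in A_c}\min\{f(y),g(z)\}$ if $A_c\ne\emptyset$, and $0$ otherwise. $f\preceq g$ means $f(c)\le g(c)$ for all $c\in M$. *)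

(* Defs.v *)
(* fuzzy values live in an arbitrary realType R
   (any realType is a copy of the real numbers). *)
From HB Require Import structures.
From mathcomp Require Import all_boot all_order all_algebra.
From mathcomp Require Import all_classical all_reals.
Set Implicit Arguments. Unset Strict Implicit. Unset Printing Implicit Defensive.
Import Order.TTheory GRing.Theory Num.Theory.
Local Open Scope classical_set_scope.
Local Open Scope ring_scope.

Section PoGammaSemigroup.
Variables (M Gamma : Type) (op : M -> Gamma -> M -> M) (le : M -> M -> Prop).

Definition is_po_gamma_semigroup : Prop :=
  [/\ inhabited M, inhabited Gamma,
      (forall a b c (g m : Gamma), op (op a g b) m c = op a g (op b m c)),
      [/\ (forall a, le a a),
          (forall a b, le a b -> le b a -> a = b) &
          (forall a b c, le a b -> le b c -> le a c)] &
      (forall a b, le a b -> forall c (g : Gamma),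
          le (op a g c) (op b g c) /\ le (op c g a) (op c g b))].

Definition downset (H : set M) : set M := fun t => exists2 h, H h & le t h.

Definition MGaGa (a : M) : set M :=
  fun t => exists x (g m : Gamma), t = op (op x g a) m a.

Definition left_regular : Prop := forall a, downset (MGaGa a) a.

Definition Aset (c : M) : set (M * M) :=
  fun p => exists g : Gamma, le c (op p.1 g p.2).

Variable R : realType.

Definition fuzzy_subset (f : M -> R) : Prop := forall x, 0 <= f x <= 1.

Definition fuzzy_one : M -> R := fun _ => 1.

Definition fuzzy_comp (f g : M -> R) : M -> R := fun c =>
  if `[< Aset c !=set0 >] then
    sup [set Num.min (f p.1) (g p.2) | p in Aset c]
  else 0.

Definition fuzzy_le (f g : M -> R) : Prop := forall c, f c <= g c.

End PoGammaSemigroup.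

(* Main.v *)
Require Import Defs.
From HB Require Import structures.
From mathcomp Require Import all_boot all_order all_algebra.
From mathcomp Require Import all_classical all_reals.
Import Order.TTheory GRing.Theory Num.Theory.
Local Open Scope ring_scope.

Set Implicit Arguments.
Section H.
Variables (M Gamma : Type) (op : M -> Gamma -> M -> M) (le : M -> M -> Prop) (R : realType).

Lemma comp_le1 (f g : M -> R) c : (forall x, f x <= 1) -> fuzzy_comp op le f g c <= 1.
Proof.
move=> f1; rewrite /fuzzy_comp; case: asboolP => [ne|_]; last exact: ler01.
apply: ge_sup; first by case: ne => p hp; exists (Num.min (f p.1) (g p.2)); exists p.
move=> _ [p _ <-]; by rewrite ge_min f1.
Qed.

Lemma comp_ge (f g : M -> R) c p : (forall x, f x <= 1) -> Aset op le c p ->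
  Num.min (f p.1) (g p.2) <= fuzzy_comp op le f g c.
Proof.
move=> f1 hp; rewrite /fuzzy_comp; case: asboolP => [ne|nne]; last first.
  by exfalso; apply: nne; exists p.
apply: sup_ubound; last by exists p.
exists 1 => _ [q _ <-]; by rewrite ge_min f1.
Qed.

Lemma comp_pos (f g : M -> R) c : 0 < fuzzy_comp op le f g c ->
  exists p, Aset op le c p /\ 0 < Num.min (f p.1) (g p.2).
Proof.
rewrite /fuzzy_comp; case: asboolP => [ne|_]; last by rewrite ltxx.
move=> hs; apply: contrapT => hn; move: hs; apply/negP; rewrite -leNgt.
apply: ge_sup; first by case: ne => p hp; exists (Num.min (f p.1) (g p.2)); exists p.
move=> _ [p hp <-]; rewrite leNgt; apply/negP => h; apply: hn; by exists p.
Qed.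
End H.

Theorem theorem28 (M Gamma : Type) (op : M -> Gamma -> M -> M)
  (le : M -> M -> Prop) (R : realType) :
  is_po_gamma_semigroup op le ->
  (left_regular op le <->
   forall f : M -> R, fuzzy_subset f ->
     fuzzy_le f (fuzzy_comp op le (@fuzzy_one M R)
                   (fuzzy_comp op le f f))).
Proof.
case=> _ _ assoc [refl antis tle] mono; split.
- move=> lr f fs c.
  have f1 : forall x, f x <= 1 by move=> x; case/andP: (fs x).
  case: (lr c) => _ [x [g [m ->]]] hc.
  have h1 : Aset op le c (x, op c m c) by exists g; rewrite -assoc.
  have := @comp_ge _ _ op le R (@fuzzy_one M R) (fuzzy_comp op le f f) _ _ (fun _ => lexx _) h1.
  move=> hh; apply: le_trans hh; rewrite /= le_min.
  apply/andP; split; first exact: f1.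
  have h2 : Aset op le (op c m c) (c, c) by exists m; apply: refl.
  have := @comp_ge _ _ op le R f f _ _ f1 h2.
  by move=> hh; apply: le_trans hh; rewrite /= le_min lexx.
- move=> H a.
  pose f : M -> R := fun t => if `[< le t a >] then 1 else 0.
  have fs : fuzzy_subset f by move=> t; rewrite /f; case: asboolP => _; rewrite ?lexx ?ler01.
  have fa : f a = 1 by rewrite /f; case: asboolP => // /(_ (refl a)).
  have := H f fs a; rewrite fa => h.
  have hp : 0 < fuzzy_comp op le (@fuzzy_one M R) (fuzzy_comp op le f f) a.
    exact: lt_le_trans ltr01 h.
  have [[x w] [[g hw] /=]] := @comp_pos _ _ op le R _ _ _ hp.
  rewrite lt_min => /andP [_ hp2].
  have [[y z] [[m hz] /=]] := @comp_pos _ _ op le R _ _ _ hp2.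
  rewrite lt_min /f; case: asboolP => [ya|_]; last by rewrite ltxx.
  case: asboolP => [za|_]; last by rewrite ltxx andbF.
  move=> _; exists (op (op x g a) m a); first by exists x, g, m.
  move: hw => /= hw; move: hz => /= hz; apply: (tle _ _ _ hw); rewrite assoc.
  have hw' := (mono _ _ hz x g).2; apply: (tle _ _ _ hw').
  apply: (mono _ _ _ x g).2.
  apply: (tle _ _ _ (mono _ _ ya z m).1).
  exact: (mono _ _ za a m).2.
Qed.
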